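(* Let $K$ be a compact Hausdorff space. If $C(K)$ has the ball fixed point property, then $K$ is an $F$-space.
   Context: $C(K)$ is the real Banach space of continuous functions $K\to\mathbb{R}$ with the sup norm. A real Banach space $X$ has the ball fixed point property (BFPP) if every nonexpansive map $T\colon B_X\to B_X$ (i.e. $\|Tx-Ty\|\le\|x-y\|$) has a fixed point, where $B_X$ is the closed unit ball. A compact space $K$ is an $F$-space if for every $g\in C(K)$ there exists a continuous $f\colon K\to[-1,1]$ with $g\cdot f=|g|$ (equivalently, disjoint cozero sets of $K$ have disjoint closures). *)

(* Defs.v *)
From HB Require Import structures.
From mathcomp Require Import all_boot all_order all_algebra.
From mathcomp Require Import all_classical all_reals all_analysis.
Import numFieldNormedType.Exports.
Import Order.TTheory GRing.Theory Num.Theory.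
Local Open Scope classical_set_scope.
Local Open Scope ring_scope.

Definition supnorm {R : realType} {K : topologicalType} (f : K -> R) : R :=
  sup [set `|f x| | x in [set: K]].

Definition CK_ball (R : realType) (K : topologicalType) : set (K -> R) :=
  [set f : K -> R | continuous f /\ supnorm f <= 1].

(* A map B -> B is represented by a
   function on all of K -> R, constrained only on the ball. *)
Definition CK_BFPP (R : realType) (K : topologicalType) : Prop :=
  forall T : (K -> R) -> (K -> R),
    (forall f, CK_ball R K f -> CK_ball R K (T f)) ->
    (forall f g, CK_ball R K f -> CK_ball R K g ->
       supnorm (T f - T g) <= supnorm (f - g)) ->
    exists f, CK_ball R K f /\ T f = f.

Definition F_space (R : realType) (K : topologicalType) : Prop :=
  forall g : K -> R, continuous g ->
    exists f : K -> R, continuous f /\ (forall x, -1 <= f x <= 1) /\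
      (forall x, g x * f x = `|g x|).

(* Main.v *)
Require Import Defs.
From HB Require Import structures.
From mathcomp Require Import all_boot all_order all_algebra.
From mathcomp Require Import all_classical all_reals all_analysis.
From mathcomp Require Import lra.
Import numFieldNormedType.Exports.
Import Order.TTheory GRing.Theory Num.Theory.
Local Open Scope classical_set_scope.
Local Open Scope ring_scope.

Definition clip {R : realType} (u : R) : R := Num.max (-1) (Num.min 1 u).

Lemma clip_lip {R : realType} (u v : R) : `|clip u - clip v| <= `|u - v|.
Proof.
rewrite /clip.
have [h|h] := leP u v.
- rewrite (distrC u) (ger0_norm (_ : 0 <= v - u)) ?subr_ge0 //.
  rewrite ler_norml.
  case: (leP 1 u) => h1; case: (leP 1 v) => h2;
  case: (leP (-1) u) => h3; case: (leP (-1) v) => h4;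
  rewrite ?(minEle, maxEle) /=;
  repeat (case: ifP => ?); apply/andP; split; lra.
- rewrite (ger0_norm (_ : 0 <= u - v)); last by rewrite subr_ge0 ltW.
  rewrite ler_norml.
  case: (leP 1 u) => h1; case: (leP 1 v) => h2;
  case: (leP (-1) u) => h3; case: (leP (-1) v) => h4;
  rewrite ?(minEle, maxEle) /=;
  repeat (case: ifP => ?); apply/andP; split; lra.
Qed.

Lemma cK_bound {R : realType} {K : topologicalType} (h : K -> R) :
  compact [set: K] -> continuous h -> exists M, forall x, `|h x| <= M.
Proof.
move=> cK ch.
have : compact (h @` [set: K]).
  by apply: continuous_compact => //; apply: continuous_subspaceT.
move=> /(@compact_bounded R R^o) [M [_ HM]].
exists (`|M| + 1) => x; apply: (HM (`|M| + 1)).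
  by rewrite (le_lt_trans (ler_norm _)) // ltrDl.
by exists x.
Qed.

Lemma le_supnorm {R : realType} {K : topologicalType} (h : K -> R) :
  compact [set: K] -> continuous h -> forall x, `|h x| <= supnorm h.
Proof.
move=> cK ch x; have [M HM] := cK_bound h cK ch.
apply: ub_le_sup; last by exists x.
by exists M => _ [y _ <-].
Qed.

Lemma supnorm_le {R : realType} {K : topologicalType} (h : K -> R) (c : R) :
  0 <= c -> (forall x, `|h x| <= c) -> supnorm h <= c.
Proof.
move=> c0 hc; rewrite /supnorm.
have [[x _]|ne] := pselect (exists x : K, True).
  by apply: ge_sup; [exists `|h x|, x | move=> _ [y _ <-]].
suff -> : [set `|h x| | x in [set: K]] = set0 by rewrite sup0.
by apply/seteqP; split => [t [y _ _]|]//; exfalso; apply: ne; exists y.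
Qed.

Lemma supnorm_ge0 {R : realType} {K : topologicalType} (h : K -> R) :
  compact [set: K] -> continuous h -> 0 <= supnorm h.
Proof.
move=> cK ch.
have [[x _]|ne] := pselect (exists x : K, True).
  exact: le_trans (normr_ge0 _) (le_supnorm h cK ch x).
rewrite /supnorm.
suff -> : [set `|h x| | x in [set: K]] = set0 by rewrite sup0.
by apply/seteqP; split => [t [y _ _]|]//; exfalso; apply: ne; exists y.
Qed.

Lemma continuous_clip {R : realType} {K : topologicalType} (f : K -> R) :
  continuous f -> continuous (fun x => clip (f x)).
Proof.
move=> cf x; rewrite /clip.
have h1 : {for x, continuous (fun y => Num.min 1 (f y))}.
  exact: (@continuous_min R K (cst 1) f x (cvg_cst _) (cf x)).
exact: (@continuous_max R K (cst (-1)) (fun y => Num.min 1 (f y)) x (cvg_cst _) h1).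
Qed.

Theorem mainTheorem2 (R : realType) (K : topologicalType) :
  compact [set: K] -> hausdorff_space K -> CK_BFPP R K -> F_space R K.
Proof.
move=> cK _ bfpp g cg.
pose T := fun f : K -> R => fun x => clip (f x + g x).
have clipb : forall u : R, `|clip u| <= 1.
  move=> u; rewrite /clip ler_norml.
  case: (leP 1 u) => h1; case: (leP (-1) u) => h3;
  rewrite ?(minEle, maxEle) /=; repeat (case: ifP => ?); apply/andP; split; lra.
have [f [[cf _] Tf]] : exists f, CK_ball R K f /\ T f = f.
  apply: bfpp.
- move=> f [cf _]; split.
    by apply: continuous_clip => x; apply: continuousD; [exact: cf|exact: cg].
  by apply: supnorm_le => // x; exact: clipb.
- move=> f h [cf _] [ch _].
  have cfh : continuous (f - h).
    by move=> x; apply: continuousB; [exact: cf|exact: ch].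
  apply: supnorm_le.
    exact: supnorm_ge0.
  move=> x; apply: le_trans (le_supnorm _ cK cfh x).
  have := clip_lip (f x + g x) (h x + g x).
  by rewrite /T /= opprD addrACA subrr addr0.
exists f; split => //.
have Hf : forall x, f x = clip (f x + g x) by move=> x; rewrite -{1}Tf.
have key : forall x, (0 < g x -> f x = 1) /\ (g x < 0 -> f x = -1).
  move=> x; have := Hf x; rewrite /clip.
  case: (leP 1 (f x + g x)) => h1; case: (leP (-1) (f x + g x)) => h3;
  rewrite ?(minEle, maxEle) /=; repeat (case: ifP => ?); move=> E;
  split => ?; lra.
split => x.
  by have := clipb (f x + g x); rewrite -Hf ler_norml.
have [gn|gp|g0] := ltgtP (g x) 0.
- by rewrite ltr0_norm // (proj2 (key x) gn) mulrN1.
- by rewrite gtr0_norm // (proj1 (key x) gp) mulr1.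
- by rewrite g0 mul0r normr0.
Qed.
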